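(* Let $\mathbb P$ be a probability measure on $\Omega_+$ under which $(\omega(x))_{x\ge0}$ is stationary. Then $E_0[D^x_\infty]\le1$ for all $x\ge0$.
   Context: Cookie environments: $\Omega_+=([1/2,1]^{\mathbb N})^{\mathbb Z}$, $\omega(x)=(\omega(x,i))_{i\ge1}$. $P_{x,\omega}$ is the law of the nearest-neighbor process $(X_n)_{n\ge0}$ with $X_0=x$ which, on its $i$-th visit to site $z$, jumps to $z+1$ with probability $\omega(z,i)$ and to $z-1$ otherwise. Annealed measure $P_x[\cdot]=\mathbb E[P_{x,\omega}[\cdot]]$, with expectation $E_x$. $D_n^x=\sum_{i=1}^{\#\{m<n:X_m=x\}}(2\omega(x,i)-1)$ and $D_\infty^x=\lim_{n\to\infty}D_n^x$ (total drift of the cookies at $x$ eaten by the walk). *)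

(* Defs.v *)
From HB Require Import structures.
From mathcomp Require Import all_boot all_order all_algebra.
From mathcomp Require Import all_classical all_reals all_analysis.
Set Implicit Arguments. Unset Strict Implicit. Unset Printing Implicit Defensive.
Import Order.TTheory GRing.Theory Num.Theory.
Local Open Scope classical_set_scope.
Local Open Scope ring_scope.

Section Cookies.
Variable R : realType.

Definition cookie : Type := {p : R | (2^-1 <= p <= 1)%R}.

Lemma cookie1_proof : (2^-1 <= (1:R) <= 1)%R.
Proof. by rewrite lexx andbT invf_le1 // ler1n. Qed.

HB.instance Definition _ := Choice.on cookie.
HB.instance Definition _ := isPointed.Build cookie (exist _ 1 cookie1_proof).

(* Omega_+ = ([1/2,1]^N)^Z ; omega z i is the (i+1)-th cookie at site z *)
Definition Omega0 : Type := int -> nat -> cookie.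

Definition coord (z : int) (i : nat) (w : Omega0) : R := sval (w z i).

Definition coordSets : set (set Omega0) :=
  [set A | exists z i (B : set R), measurable B /\ A = coord z i @^-1` B].

Definition coordSetsNonneg : set (set Omega0) :=
  [set A | exists z i (B : set R), (0 <= z)%R /\ measurable B /\ A = coord z i @^-1` B].

Definition Omega := g_sigma_algebraType coordSets.

Definition shift (k : nat) (w : Omega) : Omega := fun z => w (z + k%:Z)%R.

Definition stationary_nonneg (P : probability Omega R) : Prop :=
  forall (k : nat) (A : set Omega),
    <<s coordSetsNonneg >> A -> P (shift k @^-1` A) = P A.

Definition pos (x : int) (s : nat -> bool) (m : nat) : int :=
  (x + \sum_(l < m) (if s l then 1 else -1))%R.

Definition visits (x : int) (s : nat -> bool) (m : nat) (z : int) : nat :=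
  (\sum_(l < m) (pos x s l == z : nat))%N.

(* probability of step m: at its (visits+1)-th visit to site z the walk
   uses cookie omega(z, visits) (0-based index) *)
Definition stepP (w : Omega) (x : int) (s : nat -> bool) (m : nat) : R :=
  let z := pos x s m in
  let c := coord z (visits x s m z) w in
  if s m then c else 1 - c.

Definition pathP (w : Omega) (x : int) (s : nat -> bool) (n : nat) : R :=
  \prod_(m < n) stepP w x s m.

Definition Dn (w : Omega) (x : int) (s : nat -> bool) (n : nat) (y : int) : R :=
  \sum_(i < visits x s n y) (2 * coord y i w - 1).

Definition qE_Dn (w : Omega) (x : int) (n : nat) (y : int) : R :=
  \sum_(t : n.-tuple bool) pathP w x (nth false t) n * Dn w x (nth false t) n y.

(* quenched expectation E_{x,omega}[D_infty^y]: D_n^y is nonnegative and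
   nondecreasing in n, so by monotone convergence this is lim_n E[D_n^y] *)
Definition qE_Dinf (w : Omega) (x : int) (y : int) : \bar R :=
  limn (fun n => (qE_Dn w x n y)%:E).

End Cookies.

(* Main.v *)
Require Import Defs.
From HB Require Import structures.
From mathcomp Require Import all_boot all_order all_algebra.
From mathcomp Require Import all_classical all_reals all_analysis.
From mathcomp Require Import ring lra zify.
From mathcomp Require Import measurable_realfun.
Import Order.TTheory GRing.Theory Num.Theory.
Local Open Scope ring_scope.
Set Implicit Arguments. Unset Strict Implicit. Unset Printing Implicit Defensive.

Section Comb.
Variable R : realType.
Local Notation cd := (@Defs.coord R).
Local Notation Om := (Omega R).
Local Notation pathP := (@Defs.pathP R).
Local Notation stepP := (@Defs.stepP R).
Local Notation pos := Defs.pos.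
Local Notation visits := Defs.visits.
Local Notation Dn := (@Defs.Dn R).
Local Notation qE_Dn := (@Defs.qE_Dn R).

Definition pop (p : int) (w : Om) : Om := fun z i => w z (i + (z == p))%N.
Definition st (b : bool) : int := if b then 1 else -1.
Definition scons (b : bool) (s : nat -> bool) : nat -> bool :=
  fun m => if m is m'.+1 then s m' else b.

Lemma nth_scons b n (t : n.-tuple bool) : nth false (b :: t) = scons b (nth false t).
Proof. by apply/funext => -[|m]. Qed.

Lemma sum_tuple_cons n (F : (nat -> bool) -> R) :
  \sum_(t : n.+1.-tuple bool) F (nth false t) =
  \sum_(b : bool) \sum_(t : n.-tuple bool) F (scons b (nth false t)).
Proof.
rewrite pair_big /=.
rewrite (reindex (fun p : bool * n.-tuple bool => [tuple of p.1 :: p.2])) /=.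
  by apply: eq_bigr => -[b t] _ /=; rewrite nth_scons.
exists (fun t : n.+1.-tuple bool => (thead t, [tuple of behead t])).
  by move=> [b t] _ /=; congr pair; apply: val_inj.
by move=> t _; rewrite /= [RHS]tuple_eta; apply: val_inj.
Qed.

Lemma pos_scons0 x b s : pos x (scons b s) 0 = x.
Proof. by rewrite /pos big_ord0 addr0. Qed.

Lemma pos_sconsS x b s m : pos x (scons b s) m.+1 = pos (x + st b) s m.
Proof. by rewrite /pos big_ord_recl /= -addrA. Qed.

Lemma visits0 x s z : visits x s 0 z = 0%N.
Proof. by rewrite /visits big_ord0. Qed.

Lemma visits_sconsS x b s m z :
  visits x (scons b s) m.+1 z = ((x == z) + visits (x + st b) s m z)%N.
Proof.
rewrite /visits big_ord_recl /= pos_scons0; congr addn.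
by apply: eq_bigr => i _; rewrite /bump /= pos_sconsS.
Qed.

Lemma stepP_scons0 w x b s :
  stepP w x (scons b s) 0 = if b then cd x 0 w else 1 - cd x 0 w.
Proof. by rewrite /stepP pos_scons0 visits0. Qed.

Lemma stepP_sconsS w x b s m :
  stepP w x (scons b s) m.+1 = stepP (pop x w) (x + st b) s m.
Proof.
rewrite /stepP pos_sconsS visits_sconsS /= /Defs.coord /pop.
by rewrite addnC eq_sym.
Qed.

Lemma pathP_scons w x b s n :
  pathP w x (scons b s) n.+1 =
  (if b then cd x 0 w else 1 - cd x 0 w) * pathP (pop x w) (x + st b) s n.
Proof.
rewrite /pathP big_ord_recl stepP_scons0; congr (_ * _).
by apply: eq_bigr => i _; rewrite /bump /= stepP_sconsS.
Qed.

Lemma Dn_scons w x b s n y :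
  Dn w x (scons b s) n.+1 y =
  (x == y)%:R * (2 * cd y 0 w - 1) + Dn (pop x w) (x + st b) s n y.
Proof.
rewrite /Dn visits_sconsS; have [<-|nxy] := eqVneq x y.
  rewrite add1n big_ord_recl mul1r; congr (_ + _).
  by apply: eq_bigr => i _; rewrite /Defs.coord /pop eqxx addn1.
rewrite add0n mul0r add0r; apply: eq_bigr => i _.
by rewrite /Defs.coord /pop eq_sym (negbTE nxy) addn0.
Qed.

Lemma sum_pathP n x w : \sum_(t : n.-tuple bool) pathP w x (nth false t) n = 1.
Proof.
elim: n x w => [|n IH] x w.
  under eq_bigr do rewrite /pathP big_ord0.
  by rewrite sumr_const card_tuple expn0.
rewrite (sum_tuple_cons _ (fun s => pathP w x s n.+1)) big_bool /=.
under eq_bigr do rewrite pathP_scons.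
under [X in _ + X]eq_bigr do rewrite pathP_scons.
by rewrite -!mulr_sumr !IH !mulr1 addrC subrK.
Qed.

Fixpoint H (G : int -> R -> R) (n : nat) (p : int) (w : Om) : R :=
  match n with
  | 0 => 0
  | n'.+1 => G p (cd p 0 w) + cd p 0 w * H G n' (p + 1) (pop p w)
             + (1 - cd p 0 w) * H G n' (p - 1) (pop p w)
  end.

Definition GD (y : int) (z : int) (c : R) : R := (z == y)%:R * (2 * c - 1).

Lemma qE_DnS w x n y :
  qE_Dn w x n.+1 y = GD y x (cd x 0 w) + cd x 0 w * qE_Dn (pop x w) (x + 1) n y
     + (1 - cd x 0 w) * qE_Dn (pop x w) (x - 1) n y.
Proof.
rewrite /Defs.qE_Dn (sum_tuple_cons _ (fun s => pathP w x s n.+1 * Dn w x s n.+1 y)) big_bool /=.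
under eq_bigr do rewrite pathP_scons Dn_scons -mulrA mulrDr.
under [X in _ + X]eq_bigr do rewrite pathP_scons Dn_scons -mulrA mulrDr.
rewrite /= -!mulr_sumr !big_split /= -!mulr_suml !sum_pathP !mul1r /GD /st.
rewrite /Defs.qE_Dn.
set A := (_ * (2 * _ - 1)); set B := \sum_(i : n.-tuple bool) _; set C := \sum_(i : n.-tuple bool) _.
set c := cd x 0 w.
have -> : A = (x == y)%:R * (2 * c - 1) by rewrite /A /c; case: eqVneq => [->|_]; rewrite ?mul0r.
clearbody A B C c; ring.
Qed.

Lemma qE_Dn_H w x n y : qE_Dn w x n y = H (GD y) n x w.
Proof.
elim: n x w => [|n IH] x w.
  by rewrite /Defs.qE_Dn /= big1 // => t _; rewrite /Defs.Dn visits0 big_ord0 mulr0.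
by rewrite qE_DnS /= !IH.
Qed.

End Comb.


Section Alg.
Variable R : realType.
Local Notation cd := (@Defs.coord R).
Local Notation Om := (Omega R).
Local Notation H := (@H R).
Local Notation pop := (@pop R).

Lemma cd_ge w z i : 2^-1 <= cd z i w.
Proof. by case/andP: (svalP (w z i)). Qed.
Lemma cd_le w z i : cd z i w <= 1.
Proof. by case/andP: (svalP (w z i)). Qed.
Lemma cd_ge0 w z i : 0 <= cd z i w.
Proof. by apply: le_trans (cd_ge w z i); rewrite invr_ge0. Qed.

Definition GL (y : int) (z : int) (c : R) : R := (z == y)%:R * (1 - c).

Definition c1 : cookie R := exist _ (1:R) (cookie1_proof R).
Definition wall (y : int) (w : Om) : Om := fun z i => if z < y then c1 else w z i.

Section Pos.
Variable G : int -> R -> R.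
Hypothesis G0 : forall z c, 2^-1 <= c <= 1 -> 0 <= G z c.

Lemma H_ge0 n p w : 0 <= H G n p w.
Proof.
elim: n p w => [|n IH] p w //=.
have h1 := cd_ge0 w p 0; have h2 := cd_le w p 0.
have hG : 0 <= G p (cd p 0 w) by apply: G0; exact: (svalP (w p 0)).
have := IH (p + 1) (pop p w); have := IH (p - 1) (pop p w).
set A := H G n _ _; set B := H G n _ _; move=> hB hA; nra.
Qed.

Lemma H_mono n p w : H G n p w <= H G n.+1 p w.
Proof.
elim: n p w => [|n IH] p w /=.
  rewrite !mulr0 !addr0; exact: G0 (svalP (w p 0)).
have h1 := cd_ge0 w p 0; have h2 := cd_le w p 0.
have := IH (p + 1) (pop p w); have := IH (p - 1) (pop p w).
rewrite /=.
set A := H G n _ _; set B := H G n _ _.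
move=> hB hA; nra.
Qed.

Lemma H_mono_le m n p w : (m <= n)%N -> H G m p w <= H G n p w.
Proof.
elim: n => [|n IH]; first by rewrite leqn0 => /eqP ->.
rewrite leq_eqVlt => /predU1P[->//|/IH h]; exact: le_trans h (H_mono _ _ _).
Qed.
End Pos.

Lemma H_ext G G' n p w : G =2 G' -> H G n p w = H G' n p w.
Proof. move=> e; elim: n p w => [|n IH] p w //=; by rewrite e !IH. Qed.

Lemma H_ext_w G n p w w' : (forall z i, cd z i w = cd z i w') -> H G n p w = H G n p w'.
Proof.
elim: n p w w' => [|n IH] p w w' e //=.
have ep : forall q z i, cd z i (pop q w) = cd z i (pop q w').
  by move=> q z i; rewrite /Defs.coord /pop /=; exact: e.
by rewrite e (IH _ _ _ (ep _)) (IH (p - 1) _ _ (ep _)).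
Qed.

Lemma K_le n p w :
  H (GD 0) n p w + H (GL 0) n p w <= ((p <= 0)%R : bool)%:R + H (GL 1) n p w.
Proof.
elim: n p w => [|n IH] p w /=; first by rewrite !addr0 ler0n.
have h1 := cd_ge0 w p 0; have h2 := cd_le w p 0.
have := IH (p + 1) (pop p w); have := IH (p - 1) (pop p w).
rewrite /GD /GL.

set A := H (GD 0) n (p + 1) _; set B := H (GD 0) n (p - 1) _.
set A1 := H (GL 0) n (p + 1) _; set B1 := H (GL 0) n (p - 1) _.
set A2 := H (GL 1) n (p + 1) _; set B2 := H (GL 1) n (p - 1) _.
have [p0|[p0|[p0|p0]]] : p < 0 \/ p = 0 \/ p = 1 \/ 2 <= p by lia.
-  have -> : (p == 0) = false by lia.
  have -> : (p == 1) = false by lia.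
  have -> : (p + 1 <= 0) = true by lia.
  have -> : (p - 1 <= 0) = true by lia.
  have -> : (p <= 0) = true by lia.
  rewrite /= ?mulr0n ?mulr1n ?mul0r ?mul1r => hB hA.
  have hA' := ler_wpM2l h1 hA.
  have h3 : 0 <= 1 - cd p 0 w by lra.
  have hB' := ler_wpM2l h3 hB.
  rewrite /= in hA' hB'; nra.
-  have -> : (p == 0) = true by lia.
  have -> : (p == 1) = false by lia.
  have -> : (p + 1 <= 0) = false by lia.
  have -> : (p - 1 <= 0) = true by lia.
  have -> : (p <= 0) = true by lia.
  rewrite /= ?mulr0n ?mulr1n ?mul0r ?mul1r => hB hA.
  have hA' := ler_wpM2l h1 hA.
  have h3 : 0 <= 1 - cd p 0 w by lra.
  have hB' := ler_wpM2l h3 hB.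
  rewrite /= in hA' hB'; nra.
-  have -> : (p == 0) = false by lia.
  have -> : (p == 1) = true by lia.
  have -> : (p + 1 <= 0) = false by lia.
  have -> : (p - 1 <= 0) = true by lia.
  have -> : (p <= 0) = false by lia.
  rewrite /= ?mulr0n ?mulr1n ?mul0r ?mul1r => hB hA.
  have hA' := ler_wpM2l h1 hA.
  have h3 : 0 <= 1 - cd p 0 w by lra.
  have hB' := ler_wpM2l h3 hB.
  rewrite /= in hA' hB'; nra.
-  have -> : (p == 0) = false by lia.
  have -> : (p == 1) = false by lia.
  have -> : (p + 1 <= 0) = false by lia.
  have -> : (p - 1 <= 0) = false by lia.
  have -> : (p <= 0) = false by lia.
  rewrite /= ?mulr0n ?mulr1n ?mul0r ?mul1r => hB hA.
  have hA' := ler_wpM2l h1 hA.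
  have h3 : 0 <= 1 - cd p 0 w by lra.
  have hB' := ler_wpM2l h3 hB.
  rewrite /= in hA' hB'; nra.
Qed.

End Alg.


Section Dom.
Variable R : realType.
Local Notation cd := (@Defs.coord R).
Local Notation Om := (Omega R).
Local Notation H := (@H R).
Local Notation pop := (@pop R).

Variables (G : int -> R -> R) (y : int).
Hypothesis G0 : forall z c, 2^-1 <= c <= 1 -> 0 <= G z c.
Hypothesis Gy : forall z c, z != y -> G z c = 0.

Definition Rel (w w' : Om) :=
  (forall z i, y <= z -> cd z i w = cd z i w') /\ (forall z i, z < y -> cd z i w' = 1).

Lemma cd_pop q w z i : cd z i (pop q w) = cd z (i + (z == q))%N w.
Proof. by []. Qed.

Lemma Rel_pop_ge q w w' : y <= q -> Rel w w' -> Rel (pop q w) (pop q w').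
Proof.
move=> hq [h1 h2]; split=> z i hz; rewrite !cd_pop; first exact: h1.
exact: h2.
Qed.

Lemma Rel_pop_lt q w w' : q < y -> Rel w w' -> Rel (pop q w) w'.
Proof.
move=> hq [h1 h2]; split=> z i hz; last exact: h2.
rewrite cd_pop (_ : (z == q) = false) ?addn0; first exact: h1.
by apply/negbTE; lia.
Qed.

Lemma Rel_pop_lt' q w w' : q < y -> Rel w w' -> Rel w (pop q w').
Proof.
move=> hq [h1 h2]; split=> z i hz; rewrite cd_pop; last exact: h2.
rewrite (_ : (z == q) = false) ?addn0; first exact: h1.
by apply/negbTE; lia.
Qed.

Lemma Rel_refl w' : (forall z i, z < y -> cd z i w' = 1) -> Rel w' w'.
Proof. by move=> h; split. Qed.

Definition PA n := forall p w w', Rel w w' -> y <= p -> H G n p w <= H G n p w'.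
Definition PB n := forall p w w', Rel w w' -> p < y -> H G n.+1 p w <= H G n y w'.

Lemma PAB n : PA n /\ PB n.
Proof.
elim/ltn_ind: n => n IH.
have hA : PA n.
  case: n IH => [|m] IH p w w' hR hp //=.
  have ec : cd p 0 w = cd p 0 w' by apply: hR.1.
  rewrite ec.
  have hR' := Rel_pop_ge hp hR.
  have h1 : H G m (p+1) (pop p w) <= H G m (p+1) (pop p w').
    by apply: (IH m (ltnSn m)).1 => //; lia.
  have h2 : H G m (p-1) (pop p w) <= H G m (p-1) (pop p w').
    have [yp|py] := ltP y p.
      by apply: (IH m (ltnSn m)).1 => //; lia.
    have ep : p = y by lia.
    case: m IH h1 => [|k] IH h1 //.
    have hk : (k < k.+2)%N by [].
    apply: (le_trans ((IH k hk).2 _ _ _ hR' _)); first by lia.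
    rewrite [X in _ <= X]/= (_ : cd (p - 1) 0 (pop p w') = 1); last first.
      by apply: hR'.2; lia.
    rewrite Gy; last by apply/eqP; lia.
    rewrite subrr mul0r addr0 mul1r add0r (_ : p - 1 + 1 = y); last by lia.
    apply: (IH k hk).1; last by lia.
    by apply: Rel_pop_lt'; [lia| apply: Rel_refl; exact: hR'.2].
  have c0 := cd_ge0 w' p 0; have c1 := cd_le w' p 0.
  have h3 : 0 <= 1 - cd p 0 w' by lra.
  have := ler_wpM2l c0 h1; have := ler_wpM2l h3 h2; rewrite /= => h2' h1'.
  lra.
split=> // p w w' hR hp /=.
rewrite Gy; last by apply/eqP; lia.
have hR' := Rel_pop_lt hp hR.
have C : forall q, q <= y -> H G n q (pop p w) <= H G n y w'.
  move=> q; rewrite le_eqVlt => /predU1P[->|hq]; first exact: hA.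
  case: n IH hA hR' => [|k] IH hA hR' //.
  apply: (le_trans ((IH k (ltnSn k)).2 _ _ _ hR' hq)).
  apply: H_mono => z c hc; exact: G0.
have c0 := cd_ge0 w p 0; have c1 := cd_le w p 0.
have h3 : 0 <= 1 - cd p 0 w by lra.
have hq1 : p + 1 <= y by lia.
have hq2 : p - 1 <= y by lia.
have := ler_wpM2l c0 (C _ hq1); have := ler_wpM2l h3 (C _ hq2); rewrite /= => h2' h1'.
lra.
Qed.

End Dom.


Section Tr.
Variable R : realType.
Local Notation cd := (@Defs.coord R).
Local Notation Om := (Omega R).
Local Notation H := (@H R).
Local Notation pop := (@pop R).
Local Notation shiftw := (@Defs.shift R).
Local Notation wall := (@wall R).
Local Notation Rel := (@Rel R).

Lemma pop_shift k p (w : Om) : pop p (shiftw k w) = shiftw k (pop (p + k%:Z) w).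
Proof.
apply/funext => z; apply/funext => i; rewrite /pop /Defs.shift.
by rewrite (_ : (z + k%:Z == p + k%:Z) = (z == p)) //; lia.
Qed.

Lemma H_shift G k n p w :
  H G n (p + k%:Z) w = H (fun z => G (z + k%:Z)) n p (shiftw k w).
Proof.
elim: n p w => [|n IH] p w; first by [].
rewrite [LHS]/= [RHS]/= !pop_shift -!IH.
have -> : p + 1 + k%:Z = p + k%:Z + 1 by lia.
have -> : p - 1 + k%:Z = p + k%:Z - 1 by lia.
reflexivity.
Qed.

Lemma shift_wall (x : nat) w : shiftw x (wall x%:Z w) = wall 0 (shiftw x w).
Proof.
apply/funext => z; apply/funext => i; rewrite /wall /Defs.shift.
by rewrite (_ : (z + x%:Z < x%:Z) = (z < 0)) //; lia.
Qed.

Lemma wall10 w : wall 1 (wall 0 w) = wall 1 w.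
Proof.
apply/funext => z; apply/funext => i; rewrite /wall.
by case: ifP => // h; rewrite (_ : (z < 0) = false) //; lia.
Qed.

Lemma GD_ge0 y z (c : R) : 2^-1 <= c <= 1 -> 0 <= GD y z c.
Proof. move=> /andP[h1 h2]; rewrite /GD; apply: mulr_ge0 => //; lra. Qed.
Lemma GL_ge0 y z (c : R) : 2^-1 <= c <= 1 -> 0 <= GL y z c.
Proof. move=> /andP[h1 h2]; rewrite /GL; apply: mulr_ge0 => //; lra. Qed.
Lemma GD_y y z (c : R) : z != y -> GD y z c = 0.
Proof. by move=> /negbTE h; rewrite /GD h mul0r. Qed.
Lemma GL_y y z (c : R) : z != y -> GL y z c = 0.
Proof. by move=> /negbTE h; rewrite /GL h mul0r. Qed.

Lemma Rel_wall y w : Rel y w (wall y w).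
Proof.
split=> z i hz; rewrite /Defs.coord /wall.
  by rewrite (_ : (z < y) = false) //; lia.
by rewrite hz.
Qed.

Lemma dom_wall G y n p w :
  (forall z c, 2^-1 <= c <= 1 -> 0 <= G z c) -> (forall z c, z != y -> G z c = 0) ->
  p <= y -> H G n p w <= H G n y (wall y w).
Proof.
move=> G0 Gy; rewrite le_eqVlt => /predU1P[->|hp].
  by apply: (PAB G0 Gy n).1 => //; exact: Rel_wall.
apply: le_trans (H_mono G0 _ _ _) _.
by apply: (PAB G0 Gy n).2 => //; exact: Rel_wall.
Qed.

Lemma HD_shift (x : nat) n w :
  H (GD x%:Z) n x%:Z (wall x%:Z w) = H (GD 0) n 0 (wall 0 (shiftw x w)).
Proof.
rewrite -[X in H _ _ X]add0r H_shift shift_wall; apply: H_ext => z c.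
by rewrite /GD (_ : (z + x%:Z == x%:Z) = (z == 0)) //; lia.
Qed.

Lemma HL_shift n w :
  H (GL 1) n 1 (wall 1 w) = H (GL 0) n 0 (wall 0 (shiftw 1 w)).
Proof.
rewrite -[X in H _ _ X]add0r (H_shift _ 1) (shift_wall 1); apply: H_ext => z c.
by rewrite /GL (_ : (z + 1%:Z == 1%:Z) = (z == 0)) //; lia.
Qed.

Definition FD n (w : Om) := H (GD 0) n 0 (wall 0 w).
Definition FL n (w : Om) := H (GL 0) n 0 (wall 0 w).

Lemma step1 (x : nat) n w : H (GD x%:Z) n 0 w <= FD n (shiftw x w).
Proof.
rewrite /FD -HD_shift; apply: dom_wall => //.
- exact: GD_ge0.
- exact: GD_y.
Qed.

Lemma step2 n w : FD n w + FL n w <= 1 + FL n (shiftw 1 w).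
Proof.
apply: le_trans (K_le _ _ _) _; rewrite /= lerD2l /FL -HL_shift -(wall10 w).
apply: dom_wall => //; [exact: GL_ge0|exact: GL_y].
Qed.

End Tr.


Local Open Scope classical_set_scope.
Section Meas.
Variable R : realType.
Local Notation cd := (@Defs.coord R).
Local Notation Om := (Omega R).
Local Notation OmN := (g_sigma_algebraType (@coordSetsNonneg R)).
Local Notation H := (@H R).
Local Notation pop := (@pop R).
Local Notation shiftw := (@Defs.shift R).
Local Notation wall := (@wall R).

Lemma mcoord z i : measurable_fun setT (fun w : Om => cd z i w).
Proof.
move=> _ B mB; rewrite setTI; apply: sub_sigma_algebra.
by exists z, i, B.
Qed.

Lemma mpop q : measurable_fun setT (pop q : Om -> Om).
Proof.
eapply (@measurability _ _ Om Om setT (pop q) (@coordSets R)); first reflexivity.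
move=> _ [_ [z [i [B [mB ->]]]] <-]; rewrite setTI.
apply: sub_sigma_algebra; exists z, (i + (z == q))%N, B; split => //.
Qed.

Lemma mH G n p : (forall z, measurable_fun setT (G z)) ->
  measurable_fun setT (fun w : Om => H G n p w).
Proof.
move=> mG; elim: n p => [|n IH] p /=; first exact: measurable_cst.
apply: measurable_funD; first apply: measurable_funD.
- exact: measurableT_comp (mG p) (mcoord p 0).
- apply: measurable_funM; first exact: mcoord.
  exact: measurableT_comp (IH _) (mpop p).
- apply: measurable_funM; first exact: measurable_funB (measurable_cst _) (mcoord p 0).
  exact: measurableT_comp (IH _) (mpop p).
Qed.

Lemma mGD y z : measurable_fun setT (GD y z : R -> R).
Proof.
apply: measurable_funM; first exact: measurable_cst.
apply: measurable_funB; last exact: measurable_cst.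
apply: measurable_funM; [exact: measurable_cst|exact: measurable_id].
Qed.

Lemma mGL y z : measurable_fun setT (GL y z : R -> R).
Proof.
apply: measurable_funM; first exact: measurable_cst.
apply: measurable_funB; [exact: measurable_cst|exact: measurable_id].
Qed.

Lemma mwall : measurable_fun setT (wall 0 : OmN -> Om).
Proof.
eapply (@measurability _ _ OmN Om setT (wall 0) (@coordSets R)); first reflexivity.
move=> _ [_ [z [i [B [mB ->]]]] <-]; rewrite setTI.
have [z0|z0] := ltP z 0.
  have [B1|B1] := pselect (B 1).
    rewrite (_ : _ @^-1` _ = setT); first exact: measurableT.
    by apply/seteqP; split => // w _; rewrite /preimage /= /Defs.coord /wall z0.
  rewrite (_ : _ @^-1` _ = set0); first exact: measurable0.
  by apply/seteqP; split => // w; rewrite /preimage /= /Defs.coord /wall z0.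
apply: sub_sigma_algebra; exists z, i, B; split => //; split => //.
apply/seteqP; split => w; rewrite /preimage /= /Defs.coord /wall.
  by rewrite ltNge z0.
by rewrite ltNge z0.
Qed.

Lemma mshiftN (x : nat) : measurable_fun setT (shiftw x : Om -> OmN).
Proof.
eapply (@measurability _ _ Om OmN setT (shiftw x) (@coordSetsNonneg R)); first reflexivity.
move=> _ [_ [z [i [B [z0 [mB ->]]]]] <-]; rewrite setTI.
apply: sub_sigma_algebra; exists (z + x%:Z), i, B; split => //.
Qed.

Lemma midN : measurable_fun setT (id : Om -> OmN).
Proof.
eapply (@measurability _ _ Om OmN setT id (@coordSetsNonneg R)); first reflexivity.
move=> _ [_ [z [i [B [z0 [mB ->]]]]] <-]; rewrite setTI.
apply: sub_sigma_algebra; exists z, i, B; split => //.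
Qed.

End Meas.


Section Int.
Variable R : realType.
Local Notation cd := (@Defs.coord R).
Local Notation Om := (Omega R).
Local Notation OmN := (g_sigma_algebraType (@coordSetsNonneg R)).
Local Notation H := (@H R).
Local Notation pop := (@pop R).
Local Notation shiftw := (@Defs.shift R).
Local Notation wall := (@wall R).
Local Notation FD := (@FD R).
Local Notation FL := (@FL R).

Lemma int_shift (P : probability Om R) (hs : stationary_nonneg P) (x : nat)
  (f : OmN -> \bar R) : measurable_fun setT f -> (forall w, (0 <= f w)%E) ->
  (\int[P]_w f (shiftw x w) = \int[P]_w f w)%E.
Proof.
move=> mf f0.
transitivity (\int[P]_(w in shiftw x @^-1` setT) (f \o shiftw x) w)%E; first by [].
rewrite -(ge0_integral_pushforward (mshiftN x)) //.
transitivity (\int[P]_(w in (id : Om -> OmN) @^-1` setT) (f \o id) w)%E; last by [].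
rewrite -(ge0_integral_pushforward (@midN R)) //.
apply: eq_measure_integral; [exact: (@midN R)|exact: (mshiftN x)|].
move=> h0 h1 A mA hA.
rewrite /pushforward /=.
exact: hs.
Qed.

Lemma H_le G n p w : (forall z (c : R), 2^-1 <= c <= 1 -> G z c <= 1) ->
  H G n p w <= n%:R.
Proof.
move=> G1; elim: n p w => [|n IH] p w //=.
have h1 := cd_ge0 w p 0; have h2 := cd_le w p 0.
have hG : G p (cd p 0 w) <= 1 by apply: G1; exact: (svalP (w p 0)).
have hA := ler_wpM2l h1 (IH (p + 1) (pop p w)).
have h3 : 0 <= 1 - cd p 0 w by lra.
have hB := ler_wpM2l h3 (IH (p - 1) (pop p w)).
rewrite /= in hA hB; rewrite -natr1; lra.
Qed.

Lemma mFD n : measurable_fun setT (fun w : OmN => (FD n w)%:E).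
Proof.
apply/(@measurable_EFinP _ OmN R setT (fun w : OmN => FD n w)); rewrite /FD.
exact: (@measurableT_comp _ _ _ OmN Om _ (fun w : Om => H (GD 0) n 0 w) setT (wall 0)
   (@mH R (GD 0) n 0 (@mGD R 0)) (@mwall R)).
Qed.

Lemma mFL n : measurable_fun setT (fun w : OmN => (FL n w)%:E).
Proof.
apply/(@measurable_EFinP _ OmN R setT (fun w : OmN => FL n w)); rewrite /FL.
exact: (@measurableT_comp _ _ _ OmN Om _ (fun w : Om => H (GL 0) n 0 w) setT (wall 0)
   (@mH R (GL 0) n 0 (@mGL R 0)) (@mwall R)).
Qed.

Lemma FD_ge0 n w : 0 <= FD n w.
Proof. by apply: H_ge0 => z c; exact: GD_ge0. Qed.
Lemma FL_ge0 n w : 0 <= FL n w.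
Proof. by apply: H_ge0 => z c; exact: GL_ge0. Qed.

Local Open Scope ereal_scope.
Lemma intFD_le1 (P : probability Om R) (hs : stationary_nonneg P) n :
  (\int[P]_w (FD n w)%:E <= 1)%E.
Proof.
have mD : measurable_fun setT (fun w : Om => (FD n w)%:E).
  exact: (@measurableT_comp _ _ _ Om OmN _ _ setT id (mFD n) (@midN R)).
have mL : measurable_fun setT (fun w : Om => (FL n w)%:E).
  exact: (@measurableT_comp _ _ _ Om OmN _ _ setT id (mFL n) (@midN R)).
have mLs : measurable_fun setT (fun w : Om => (FL n (shiftw 1 w))%:E).
  exact: (@measurableT_comp _ _ _ Om OmN _ _ setT (shiftw 1) (mFL n) (mshiftN 1)).
have fin : (\int[P]_w (FL n w)%:E) \is a fin_num.
  rewrite ge0_fin_numE; last by apply: integral_ge0 => w _; rewrite lee_fin FL_ge0.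
  apply: (@le_lt_trans _ _ (\int[P]_w (cst (n%:R : R)%:E) w)).
    apply: ge0_le_integral => //; first by move=> w _; rewrite lee_fin FL_ge0.
    move=> w _; rewrite lee_fin; apply: H_le => z c /andP[c1 c2].
    rewrite /GL; case: (z == 0%R) => /=; lra.
  rewrite integral_cst //; match goal with |- context[((n%:R)%:E * ?m)%E] => have -> : m = 1 by exact: probability_setT end; by rewrite mule1 ltry.
rewrite -(leeD2rE _ _ fin).
rewrite -ge0_integralD //; last 2 first.
  by move=> w _; rewrite lee_fin FD_ge0.
  by move=> w _; rewrite lee_fin FL_ge0.
apply: (@le_trans _ _ (\int[P]_w (1 + (FL n (shiftw 1 w))%:E))%E).
  apply: ge0_le_integral => //.
  - by move=> w _; rewrite -EFinD lee_fin addr_ge0 ?FD_ge0 ?FL_ge0.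
  - by apply: emeasurable_funD.
  - by apply: emeasurable_funD => //; exact: measurable_cst.
  - by move=> w _; rewrite -EFinD lee_fin; exact: step2.
rewrite ge0_integralD //; cycle 1.
  all: try (by move=> w _; rewrite lee_fin FL_ge0).
  all: try (exact: measurable_cst).
rewrite integral_cst //; match goal with |- context[(1 * ?m)%E] => have -> : m = 1 by exact: probability_setT end; rewrite mul1e.
rewrite (int_shift hs 1 (mFL n)) //.
by move=> w; rewrite lee_fin FL_ge0.
Qed.

End Int.

Local Close Scope classical_set_scope.
Unset Implicit Arguments. Set Strict Implicit.

Theorem mainTheorem11 (R : realType) (P : probability (Omega R) R) :
  stationary_nonneg P ->
  forall x : nat, (\int[P]_w qE_Dinf w 0 x%:Z <= 1)%E.
Proof.
move=> hs x.
pose g := fun n (w : Omega R) => ((@H R (GD x%:Z) n 0 w)%:E)%E.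
have mg : forall n, measurable_fun setT (g n).
  move=> n; apply/(@measurable_EFinP _ (Omega R) R setT (fun w => @H R (GD x%:Z) n 0 w)).
  exact: (@mH R (GD x%:Z) n 0 (@mGD R x%:Z)).
have g0 : forall n w, setT w -> (0 <= g n w)%E.
  move=> n w _; rewrite /g lee_fin; apply: H_ge0 => z c; exact: GD_ge0.
have nd : forall w, setT w -> {homo g^~ w : n m / (n <= m)%N >-> (n <= m)%E}.
  move=> w _ m k mk; rewrite /g lee_fin; apply: H_mono_le => // z c; exact: GD_ge0.
rewrite (eq_integral (fun w => limn (g^~ w))); last first.
  move=> w _; rewrite /qE_Dinf.
  have -> : (fun n => (qE_Dn w 0 n x%:Z)%:E) = g^~ w.
    by apply/funext => n; rewrite /g qE_Dn_H.
  by [].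
rewrite monotone_convergence //.
apply: lime_le.
  apply: ereal_nondecreasing_is_cvgn => m k mk.
  apply: ge0_le_integral => //.
  all: first [by move=> w _; exact: g0 | by move=> w _; exact: nd | idtac].
apply: nearW => n.
apply: (@le_trans _ _ (\int[P]_w (@FD R n (Defs.shift x w))%:E)%E).
  apply: ge0_le_integral => //.
  - by move=> w _; exact: g0.
  - exact: (@measurableT_comp _ _ _ (Omega R) (g_sigma_algebraType (@coordSetsNonneg R)) _ _ setT (Defs.shift x) (mFD n) (mshiftN x)).
  - by move=> w _; rewrite /g lee_fin; exact: step1.
rewrite (int_shift hs x (mFD n)); last by move=> w; rewrite lee_fin FD_ge0.
exact: (intFD_le1 hs n).
Qed.
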